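(* Let $n\ge 11$ and let $G$ be a connected tridegreed graph of order $n$ whose set of distinct vertex degrees is $\{d_1,d_2,d_3\}$ with $d_1<d_2<d_3=n-1$. Then there exists an integer $t$ lying between $\frac{3}{10}n$ and $\frac{4}{10}n$ such that $$cM_2(G)<cM_2(K_t+\overline{K}_{n-t}).$$
   Context: All graphs are finite and simple. For a graph $G$ and a vertex $u$, $d_u(G)$ denotes the degree of $u$ in $G$. The complementary second Zagreb index of $G$ is $cM_2(G)=\sum_{uv\in E(G)}\left|(d_u(G))^2-(d_v(G))^2\right|$. A graph is tridegreed if the set of distinct vertex degrees has exactly three elements. $K_m$ is the complete graph on $m$ vertices, $\overline{H}$ is the complement of $H$, and $H_1+H_2$ (the join) is the graph on the disjoint union $V(H_1)\cup V(H_2)$ with edge set $E(H_1)\cup E(H_2)\cup\{h_1h_2: h_1\in V(H_1),h_2\in V(H_2)\}$. *)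

(* Defs.v *)
From mathcomp Require Import all_boot.
Set Implicit Arguments. Unset Strict Implicit. Unset Printing Implicit Defensive.

Definition simple_graph (T : finType) (e : rel T) : Prop :=
  symmetric e /\ irreflexive e.

Definition deg (T : finType) (e : rel T) (u : T) : nat := #|[set v | e u v]|.

Definition connected (T : finType) (e : rel T) : Prop :=
  forall u v : T, connect e u v.

Definition absdiff (a b : nat) : nat := (a - b) + (b - a).

(* cM2(G) = sum over edges uv of |d_u^2 - d_v^2|; each unordered edge is
   counted twice in the ordered double sum, hence the halving. *)
Definition cM2 (T : finType) (e : rel T) : nat :=
  (\sum_(u : T) \sum_(v : T | e u v) absdiff (deg e u ^ 2) (deg e v ^ 2)) %/ 2.

Definition complete_rel (m : nat) : rel 'I_m := fun a b => a != b.
Definition empty_rel (m : nat) : rel 'I_m := fun _ _ => false.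

Definition join_rel (T1 T2 : finType) (e1 : rel T1) (e2 : rel T2) : rel (sum T1 T2) :=
  fun x y => match x, y with
             | inl a, inl b => e1 a b
             | inr a, inr b => e2 a b
             | _, _ => true
             end.

Definition split_graph (t n : nat) : rel (sum 'I_t 'I_(n - t)) :=
  join_rel (@complete_rel t) (@empty_rel (n - t)).

(* Main.v *)
Require Import Defs.
From Stdlib Require Import ZArith Lia.
From mathcomp Require Import all_boot zify.
Set Implicit Arguments. Unset Strict Implicit. Unset Printing Implicit Defensive.

Definition fZ (n t : Z) : Z := (t*(n-t)*((n-1)*(n-1)-t*t))%Z.

Lemma fZ_inc n s : (11 <= n -> 0 <= s -> 10*s < 3*n -> fZ n s <= fZ n (s+1))%Z.
Proof. intros. unfold fZ. nia. Qed.

Lemma fZ_dec n s : (11 <= n -> 0 <= s -> s+1 <= n -> 4*n +2 <= 10*s+10 -> fZ n (s+1) <= fZ n s)%Z.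
Proof. intros. unfold fZ.
destruct (Z.eq_dec (s+1) n) as [E|E].
{ rewrite E. replace (n-n)%Z with 0%Z by lia. nia. }
destruct (Z.eq_dec n 11) as [E11|E11].
{ subst n. assert (s = 4 \/ s = 5 \/ s = 6 \/ s = 7 \/ s = 8 \/ s = 9)%Z as HH by lia.
  by case: HH => [->|[->|[->|[->|[->|->]]]]]; vm_compute. }
assert (0 <= (n-s-2)*(10*s+8-4*n)*(10*s+8-4*n))%Z by (apply Z.mul_nonneg_nonneg; nia).
assert (0 <= (n-s-2)*(10*s+8-4*n)*(n-12))%Z by (apply Z.mul_nonneg_nonneg; nia).
assert (0 <= (n-s-2)*(n-12)*(n-12))%Z by (apply Z.mul_nonneg_nonneg; nia).
assert (0 <= (10*s+8-4*n)*(n-12)*(n-12))%Z by (apply Z.mul_nonneg_nonneg; nia).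
assert (0 <= (10*s+8-4*n)*(10*s+8-4*n)*(n-12))%Z by (apply Z.mul_nonneg_nonneg; nia).
nia. Qed.


Lemma fZ_inc_chain n s (d : nat) : (11 <= n -> 0 <= s -> 10*(s+Z.of_nat d) < 3*n + 10 -> fZ n s <= fZ n (s+Z.of_nat d))%Z.
Proof.
intros Hn Hs. induction d as [|d IH]; intros Hlt.
{ replace (s+Z.of_nat 0)%Z with s by lia; lia. }
eapply Z.le_trans; [apply IH; lia|].
replace (s + Z.of_nat d.+1)%Z with (s+Z.of_nat d+1)%Z by lia.
apply fZ_inc; lia.
Qed.

Lemma fZ_dec_chain n t (d : nat) : (11 <= n -> 0 <= t -> t + Z.of_nat d <= n -> 4*n+2 <= 10*t+10 -> fZ n (t+Z.of_nat d) <= fZ n t)%Z.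
Proof.
intros Hn Hs. induction d as [|d IH]; intros Hle Hlt.
{ replace (t+Z.of_nat 0)%Z with t by lia; lia. }
eapply Z.le_trans; [|apply IH; lia].
replace (t + Z.of_nat d.+1)%Z with (t+Z.of_nat d+1)%Z by lia.
apply fZ_dec; lia.
Qed.

Lemma fZ_best (n s : nat) : 11 <= n -> s <= n ->
  exists t : nat, 3 * n <= 10 * t <= 4 * n /\ (fZ (Z.of_nat n) (Z.of_nat s) <= fZ (Z.of_nat n) (Z.of_nat t))%Z.
Proof.
move=> Hn Hs.
case: (ltnP (10 * s) (3 * n)) => H1.
  exists ((3 * n + 9) %/ 10). split. lia.
  have := @fZ_inc_chain (Z.of_nat n) (Z.of_nat s) ((3 * n + 9) %/ 10 - s).
  have -> : (Z.of_nat s + Z.of_nat ((3 * n + 9) %/ 10 - s))%Z = Z.of_nat ((3 * n + 9) %/ 10) by lia.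
  move=> H; apply: H; lia.
case: (leqP (10 * s) (4 * n)) => H2.
  exists s; split => //; lia.
exists ((4 * n) %/ 10). split. lia.
have := @fZ_dec_chain (Z.of_nat n) (Z.of_nat ((4 * n) %/ 10)) (s - (4 * n) %/ 10).
have -> : (Z.of_nat ((4 * n) %/ 10) + Z.of_nat (s - (4 * n) %/ 10))%Z = Z.of_nat s by lia.
move=> H; apply: H; lia.
Qed.

Lemma gZ n s : 1 <= n -> s <= n ->
  Z.of_nat (s * (n - s) * absdiff (n.-1 ^ 2) (s ^ 2)) = fZ (Z.of_nat n) (Z.of_nat s).
Proof.
move=> h1 h2.
case: (ltnP s n) => h3; last first.
  have -> : s = n by lia.
  rewrite subnn muln0 mul0n /fZ. rewrite Z.sub_diag. lia.
have h4 : s ^ 2 <= n.-1 ^ 2 by rewrite leq_exp2r; lia.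
have -> : absdiff (n.-1 ^ 2) (s ^ 2) = n.-1 ^ 2 - s ^ 2 by rewrite /absdiff; lia.
rewrite !Nat2Z.inj_mul Nat2Z.inj_sub; last by apply/leP; lia.
rewrite Nat2Z.inj_sub; last by apply/leP.
rewrite /fZ !expnS !expn0 !muln1 !Nat2Z.inj_mul.
have -> : Z.of_nat n.-1 = (Z.of_nat n - 1)%Z by lia.
lia.
Qed.

From mathcomp Require Import all_algebra ring zify.

Lemma split3 (T : finType) (P1 P2 P3 : pred T) (F : T -> nat) :
  (forall v, P1 v + P2 v + P3 v = 1) ->
  \sum_v F v = \sum_(v | P1 v) F v + \sum_(v | P2 v) F v + \sum_(v | P3 v) F v.
Proof.
move=> h; rewrite (big_mkcond P1) (big_mkcond P2) (big_mkcond P3) -!big_split /=.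
apply: eq_bigr => v _; move: (h v).
by case: (P1 v); case: (P2 v); case: (P3 v) => //=; rewrite ?addn0.
Qed.

Lemma card_set_sum (T : finType) (P : pred T) : #|[set v | P v]| = \sum_v (P v : nat).
Proof.
rewrite -sum1_card big_mkcond /=; apply: eq_bigr => v _; rewrite inE; by case: (P v).
Qed.

Lemma deg_sum (T : finType) (e : rel T) u : deg e u = \sum_v (e u v : nat).
Proof. exact: card_set_sum. Qed.

Lemma absdiffC a b : absdiff a b = absdiff b a.
Proof. rewrite /absdiff; lia. Qed.

Lemma absdiffnn a : absdiff a a = 0.
Proof. rewrite /absdiff; lia. Qed.

Lemma dominating (T : finType) (e : rel T) u v : simple_graph e ->
  deg e u = #|T|.-1 -> v != u -> e u v.
Proof.
move=> [_ irr] hd hvu.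
have hsub : [set w | e u w] \subset [set~ u].
  apply/subsetP => w; rewrite !inE => huw; apply/eqP => hw; subst w.
  by rewrite irr in huw.
have : [set w | e u w] == [set~ u].
  rewrite eqEcard hsub cardsC1 -hd /deg /=.
  by apply/eq_leq/eq_card => w; rewrite !inE.
move/eqP => hE.
have : v \in [set~ u] by rewrite !inE.
by rewrite -hE inE.
Qed.

Lemma sum_const_pred (T : finType) (P : pred T) (a : nat) :
  \sum_(v | P v) a = (\sum_(v | P v) 1) * a.
Proof. by rewrite big_distrl /=; apply: eq_bigr => v _; rewrite mul1n. Qed.

Lemma sum_pos (T : finType) (P : pred T) u : P u -> 1 <= \sum_(v | P v) 1.
Proof. by move=> hu; rewrite (bigD1 u) //=. Qed.

Lemma deg_split_l t n (a : 'I_t) : t <= n -> deg (@split_graph t n) (inl a) = n.-1.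
Proof.
move=> Htn; rewrite deg_sum big_sumType /=.
have -> : \sum_(i < n - t) (@split_graph t n (inl a) (inr i) : nat) = n - t.
  by rewrite (eq_bigr (fun _ => 1)) // sum1_card card_ord.
have -> : \sum_(i < t) (@split_graph t n (inl a) (inl i) : nat) = t.-1.
  rewrite -card_set_sum.
  have -> : [set b | @split_graph t n (inl a) (inl b)] = [set~ a].
    by apply/setP => b; rewrite !inE /split_graph /join_rel /complete_rel eq_sym.
  by rewrite cardsC1 card_ord.
have := ltn_ord a; lia.
Qed.

Lemma deg_split_r t n (c : 'I_(n - t)) : deg (@split_graph t n) (inr c) = t.
Proof.
rewrite deg_sum big_sumType /=.
rewrite (eq_bigr (fun _ => 1)) // sum1_card card_ord.
by rewrite big1 ?addn0.
Qed.

Lemma cM2_split t n : 1 <= t <= n ->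
  cM2 (@split_graph t n) = t * (n - t) * absdiff (n.-1 ^ 2) (t ^ 2).
Proof.
move=> /andP [H1 H2]; rewrite /cM2 big_sumType /=.
rewrite (eq_bigr (fun _ => (n - t) * absdiff (n.-1 ^ 2) (t ^ 2))); last first.
  move=> a _; rewrite big_mkcond big_sumType /= big1; last first.
    by move=> b _; rewrite !deg_split_l // absdiffnn; case: ifP.
  rewrite (eq_bigr (fun _ => absdiff (n.-1 ^ 2) (t ^ 2))); last first.
    by move=> c _; rewrite deg_split_l // deg_split_r.
  by rewrite sum_nat_const card_ord.
rewrite [X in _ + X](eq_bigr (fun _ => t * absdiff (n.-1 ^ 2) (t ^ 2))); last first.
  move=> c _; rewrite big_mkcond big_sumType /= [X in _ + X]big1 ?addn0; last first.
    by move=> b _.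
  rewrite (eq_bigr (fun _ => absdiff (n.-1 ^ 2) (t ^ 2))); last first.
    by move=> b _; rewrite deg_split_l // deg_split_r absdiffC.
  by rewrite sum_nat_const card_ord.
rewrite !sum_nat_const !card_ord.
have -> : t * ((n - t) * absdiff (n.-1 ^ 2) (t ^ 2)) + (n - t) * (t * absdiff (n.-1 ^ 2) (t ^ 2))
  = (t * (n - t) * absdiff (n.-1 ^ 2) (t ^ 2)) * 2 by rewrite mulnA [(n - t) * _]mulnA [(n - t) * t]mulnC addnn -mul2n mulnC.
by rewrite mulnK.
Qed.

Lemma arith (n k x y d1 d2 M : nat) : 1 <= k -> 1 <= x -> 1 <= y -> k + x + y = n ->
  d1 < d2 -> d2 < n.-1 -> M <= x * y -> M + x * k <= x * d1 ->
  exists s, s <= n /\ k * x * (n.-1 ^ 2 - d1 ^ 2) + k * y * (n.-1 ^ 2 - d2 ^ 2) + (d2 ^ 2 - d1 ^ 2) * M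
     < s * (n - s) * absdiff (n.-1 ^ 2) (s ^ 2).
Proof.
move=> hk hx hy hn h12 h2N hMy hMd.
set N := n.-1.
have hN : n = N.+1 by rewrite /N; lia.
have hkd : k <= d1.
  have : x * k <= x * d1 by lia.
  by rewrite leq_pmul2l.
have e1 : d1 ^ 2 < d2 ^ 2 by rewrite ltn_exp2r.
have e2 : d2 ^ 2 < N ^ 2 by rewrite ltn_exp2r.
have e3 : k ^ 2 <= d1 ^ 2 by rewrite leq_exp2r.
set a := N ^ 2 - d1 ^ 2. set b := N ^ 2 - d2 ^ 2. set c := d2 ^ 2 - d1 ^ 2.
have hab : a = b + c by rewrite /a /b /c; lia.
have hb : 0 < b by rewrite /b; lia.
case: (leqP M (k * y)) => hM.
- exists k; split; first lia.
  have hk' : absdiff (N ^ 2) (k ^ 2) = N ^ 2 - k ^ 2 by rewrite /absdiff; lia.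
  rewrite hk'.
  have hnk : n - k = x + y by lia.
  rewrite hnk.
  case: (ltnP k d1) => hkd1.
  + have e4 : a < N ^ 2 - k ^ 2.
      rewrite /a; have : k ^ 2 < d1 ^ 2 by rewrite ltn_exp2r. lia.
    have h1 : k * x * a + k * y * b + c * M <= k * (x + y) * a.
      have : c * M <= c * (k * y) by rewrite leq_mul2l hM orbT.
      have -> : k * (x + y) * a = k * x * a + k * y * b + c * (k * y) by rewrite hab; ring.
      lia.
    have : k * (x + y) * a < k * (x + y) * (N ^ 2 - k ^ 2).
      by rewrite ltn_pmul2l // muln_gt0 hk; lia.
    lia.
  + have hkk : d1 = k by lia.
    have hM0 : M = 0.
      move: hMd; rewrite hkk; lia.
    rewrite hM0 muln0 addn0 /a hkk.
    have hb' : b < N ^ 2 - k ^ 2 by rewrite /b -hkk; lia.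
    have : k * y * b < k * y * (N ^ 2 - k ^ 2) by rewrite ltn_pmul2l // muln_gt0 hk.
    have -> : k * (x + y) * (N ^ 2 - k ^ 2) = k * x * (N ^ 2 - k ^ 2) + k * y * (N ^ 2 - k ^ 2) by ring.
    lia.
- set s := minn d1 (n - x).
  exists s; split; first by rewrite /s; lia.
  have hs1 : s <= d1 by rewrite /s geq_minl.
  have hs2 : s <= n - x by rewrite /s geq_minr.
  have hsN : s <= N by lia.
  have hk' : absdiff (N ^ 2) (s ^ 2) = N ^ 2 - s ^ 2.
    rewrite /absdiff; have : s ^ 2 <= N ^ 2 by rewrite leq_exp2r. lia.
  rewrite hk'.
  have st1 : k * x * a + k * y * b + c * M < (k * x + M) * a.
    have : k * y * b < M * b by rewrite ltn_pmul2r.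
    have -> : (k * x + M) * a = k * x * a + M * b + c * M by rewrite hab; ring.
    lia.
  have st2 : k * x + M <= x * s.
    have : s = d1 \/ s = n - x by rewrite /s; lia.
    case=> ->.
    + lia.
    + have -> : n - x = k + y by lia.
      have -> : x * (k + y) = x * k + x * y by ring.
      lia.
  have st3 : a <= N ^ 2 - s ^ 2.
    rewrite /a; have : s ^ 2 <= d1 ^ 2 by rewrite leq_exp2r. lia.
  have st4 : x <= n - s by lia.
  have : (k * x + M) * a <= x * s * (N ^ 2 - s ^ 2) by apply: leq_mul.
  have : x * s * (N ^ 2 - s ^ 2) <= s * (n - s) * (N ^ 2 - s ^ 2).
    apply: leq_mul => //; rewrite mulnC; exact: leq_mul.
  lia.
Qed.

Lemma graph_part (n : nat) (T : finType) (e : rel T) (d1 d2 d3 : nat) :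
  #|T| = n -> simple_graph e ->
  (forall d, (exists u : T, deg e u = d) <-> d \in [:: d1; d2; d3]) ->
  d1 < d2 -> d2 < d3 -> d3 = n.-1 ->
  exists k x y M, [/\ 1 <= k, 1 <= x, 1 <= y & k + x + y = n] /\ [/\ M <= x * y, M + x * k <= x * d1 &
   cM2 e = k * x * (n.-1 ^ 2 - d1 ^ 2) + k * y * (n.-1 ^ 2 - d2 ^ 2) + (d2 ^ 2 - d1 ^ 2) * M].
Proof.
move=> hT hs hdeg h12 h23 h3.
have [hsym hirr] := hs.
have hin u : deg e u \in [:: d1; d2; d3] by apply/hdeg; exists u.
have hex d : d \in [:: d1; d2; d3] -> exists u, deg e u = d by move/hdeg.
pose pK := fun u => deg e u == d3.
pose pX := fun u => deg e u == d1.
pose pY := fun u => deg e u == d2.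
have hpart v : pK v + pX v + pY v = 1.
  move: (hin v); rewrite /pK /pX /pY !inE.
  case/or3P => /eqP ->; rewrite ?eqxx.
  - by rewrite (ltn_eqF h12) (ltn_eqF (ltn_trans h12 h23)).
  - by rewrite (gtn_eqF h12) (ltn_eqF h23).
  - by rewrite (gtn_eqF h23) (gtn_eqF (ltn_trans h12 h23)).
have sp3 (F : T -> nat) : \sum_v F v = \sum_(v | pK v) F v + \sum_(v | pX v) F v + \sum_(v | pY v) F v.
  exact: split3.
pose k := \sum_(v | pK v) 1.
pose x := \sum_(v | pX v) 1.
pose y := \sum_(v | pY v) 1.
have hk : 1 <= k.
  have [u hu] : exists u, deg e u = d3 by apply: hex; rewrite !inE eqxx !orbT.
  by apply: (@sum_pos _ pK u); apply/eqP.
have hx : 1 <= x.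
  have [u hu] : exists u, deg e u = d1 by apply: hex; rewrite !inE eqxx.
  by apply: (@sum_pos _ pX u); apply/eqP.
have hy : 1 <= y.
  have [u hu] : exists u, deg e u = d2 by apply: hex; rewrite !inE eqxx !orbT.
  by apply: (@sum_pos _ pY u); apply/eqP.
have hn : k + x + y = n.
  by rewrite -(sp3 (fun _ => 1)) sum1_card hT.
have hdom u v : pK u -> v != u -> e u v.
  move=> hu; apply: dominating => //; rewrite hT -h3; exact/eqP.
have hK u v : pK u -> ~~ pK v -> e u v.
  move=> hu hv; apply: hdom => //; apply: contraNneq hv => ->; exact: hu.
have hK' u v : ~~ pK u -> pK v -> e u v.
  by move=> hu hv; rewrite hsym; apply: hK.
have nKX v : pX v -> ~~ pK v.
  by rewrite /pX /pK => /eqP ->; rewrite (ltn_eqF (ltn_trans h12 h23)).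
have nKY v : pY v -> ~~ pK v.
  by rewrite /pY /pK => /eqP ->; rewrite (ltn_eqF h23).
set N := n.-1.
set a := N ^ 2 - d1 ^ 2. set b := N ^ 2 - d2 ^ 2. set c := d2 ^ 2 - d1 ^ 2.
have e1 : d1 ^ 2 < d2 ^ 2 by rewrite ltn_exp2r.
have e2 : d2 ^ 2 < N ^ 2 by rewrite ltn_exp2r // /N -h3.
have habs (u v : T) : absdiff (deg e u ^ 2) (deg e v ^ 2) =
   if pK u then (if pX v then a else if pY v then b else 0)
   else if pX u then (if pK v then a else if pY v then c else 0)
   else (if pK v then b else if pX v then c else 0).
  move: (hpart u) (hpart v); rewrite /pK /pX /pY.
  case: eqP => hu1; case: eqP => hu2; case: eqP => hu3 //= _;
  case: eqP => hv1; case: eqP => hv2; case: eqP => hv3 //= _;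
  rewrite ?hu1 ?hu2 ?hu3 ?hv1 ?hv2 ?hv3 -?h3 /absdiff /a /b /c -/N; lia.
have XnK v : pX v -> pK v = false by move: (hpart v); case: (pK v); case: (pX v); case: (pY v).
have XnY v : pX v -> pY v = false by move: (hpart v); case: (pK v); case: (pX v); case: (pY v).
have YnK v : pY v -> pK v = false by move: (hpart v); case: (pK v); case: (pX v); case: (pY v).
have YnX v : pY v -> pX v = false by move: (hpart v); case: (pK v); case: (pX v); case: (pY v).
have KnX v : pK v -> pX v = false by move: (hpart v); case: (pK v); case: (pX v); case: (pY v).
have KnY v : pK v -> pY v = false by move: (hpart v); case: (pK v); case: (pX v); case: (pY v).
pose m u := \sum_(v | pY v) (e u v : nat).
pose cc u := \sum_(v | pX v) (e u v : nat).
pose M := \sum_(u | pX u) m u.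
have hI u : \sum_(v | e u v) absdiff (deg e u ^ 2) (deg e v ^ 2) =
   if pK u then x * a + y * b else if pX u then k * a + m u * c else k * b + cc u * c.
  rewrite big_mkcond /= sp3.
  case hu : (pK u).
  + rewrite [X in X + _ + _ = _]big1; last by move=> v hv; rewrite habs hu KnX ?KnY //; case: (e u v).
    rewrite [X in _ + X + _ = _](eq_bigr (fun _ => a)); last first.
      by move=> v hv; rewrite habs hu hv hK // XnK.
    rewrite [X in _ + X = _](eq_bigr (fun _ => b)); last first.
      by move=> v hv; rewrite habs hu YnX // hv hK // YnK.
    by rewrite (sum_const_pred pX a) (sum_const_pred pY b) add0n.
  case hu2 : (pX u).
  + rewrite [X in X + _ + _ = _](eq_bigr (fun _ => a)); last first.
      by move=> v hv; rewrite habs hu hu2 hv hK' ?hu.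
    rewrite [X in _ + X + _ = _]big1; last by move=> v hv; rewrite habs hu hu2 XnK ?XnY //; case: (e u v).
    rewrite [X in _ + X = _](eq_bigr (fun v => (e u v : nat) * c)); last first.
      by move=> v hv; rewrite habs hu hu2 YnK // hv; case: (e u v); rewrite ?mul1n ?mul0n.
    by rewrite (sum_const_pred pK a) -big_distrl /= addn0.
  + rewrite [X in X + _ + _ = _](eq_bigr (fun _ => b)); last first.
      by move=> v hv; rewrite habs hu hu2 hv hK' ?hu.
    rewrite [X in _ + X + _ = _](eq_bigr (fun v => (e u v : nat) * c)); last first.
      by move=> v hv; rewrite habs hu hu2 XnK // hv; case: (e u v); rewrite ?mul1n ?mul0n.
    rewrite [X in _ + X = _]big1; last by move=> v hv; rewrite habs hu hu2 YnK ?YnX //; case: (e u v).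
    by rewrite (sum_const_pred pK b) -big_distrl /= addn0.
have hdX u : pX u -> k + m u <= d1.
  move=> hu; have <- : deg e u = d1 by apply/eqP.
  rewrite deg_sum sp3.
  have -> : \sum_(v | pK v) (e u v : nat) = k.
    by apply: eq_bigr => v hv; rewrite hK' // XnK.
  rewrite -addnA leq_add2l; exact: leq_addl.
have hm u : m u <= y.
  by apply: leq_sum => v _; case: (e u v).
have hM1 : M <= x * y.
  have hsy : \sum_(u | pX u) y = x * y by exact: sum_const_pred.
  rewrite -hsy; exact: leq_sum.
have hM2 : M + x * k <= x * d1.
  have hs1 : \sum_(u | pX u) k = x * k by exact: sum_const_pred.
  have hs2 : \sum_(u | pX u) d1 = x * d1 by exact: sum_const_pred.
  rewrite /M -hs1 -hs2 -big_split /=.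
  by apply: leq_sum => u hu; rewrite addnC; apply: hdX.
have hcc : \sum_(u | pY u) cc u = M.
  rewrite /M /cc /m exchange_big /=; apply: eq_bigr => v _; apply: eq_bigr => u _.
  by rewrite hsym.
exists k, x, y, M; split; first by split.
split => //.
rewrite /cM2.
have -> : \sum_u \sum_(v | e u v) absdiff (deg e u ^ 2) (deg e v ^ 2)
   = (k * x * a + k * y * b + c * M) * 2.
  rewrite sp3.
  rewrite (eq_bigr (fun _ => x * a + y * b)); last by move=> u hu; rewrite hI hu.
  rewrite [X in _ + X + _ = _](eq_bigr (fun u => k * a + m u * c)); last by move=> u hu; rewrite hI XnK // hu.
  rewrite [X in _ + X = _](eq_bigr (fun u => k * b + cc u * c)); last by move=> u hu; rewrite hI YnK // YnX.
  have hs1 : \sum_(u | pK u) (x * a + y * b) = k * (x * a + y * b) by exact: sum_const_pred.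
  have hs2 : \sum_(u | pX u) (k * a) = x * (k * a) by exact: sum_const_pred.
  have hs3 : \sum_(u | pY u) (k * b) = y * (k * b) by exact: sum_const_pred.
  have hs4 : \sum_(u | pX u) (m u * c) = M * c by rewrite /M big_distrl.
  have hs5 : \sum_(u | pY u) (cc u * c) = M * c by rewrite -hcc big_distrl.
  rewrite hs1 !big_split /= hs2 hs3 hs4 hs5.
  ring.
by rewrite mulnK.
Qed.

Theorem proposition5 (n : nat) (T : finType) (e : rel T) (d1 d2 d3 : nat) :
  11 <= n -> #|T| = n -> simple_graph e -> connected e ->
  (forall d, (exists u : T, deg e u = d) <-> d \in [:: d1; d2; d3]) ->
  d1 < d2 -> d2 < d3 -> d3 = n.-1 ->
  exists t : nat, 3 * n <= 10 * t <= 4 * n /\ cM2 e < cM2 (@split_graph t n).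
Proof.
move=> hn hT hs _ hdeg h12 h23 h3.
have [k [x [y [M [[hk hx hy hsum] [hM1 hM2 hcm]]]]]] := graph_part hT hs hdeg h12 h23 h3.
have h2N : d2 < n.-1 by rewrite -h3.
have [s [hsn hlt]] := arith hk hx hy hsum h12 h2N hM1 hM2.
have [t [ht hf]] := fZ_best hn hsn.
exists t; split => //.
have ht1 : 1 <= t <= n by lia.
rewrite cM2_split // hcm.
have e1 := gZ (n := n) (s := s) ltac:(lia) hsn.
have e2 := gZ (n := n) (s := t) ltac:(lia) ltac:(lia).
lia.
Qed.
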